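(* Let $G=(V,E)$ be a finite connected simple graph and $i\in V$. For $u,v\in V\setminus\{i\}$ write $u\sim_i v$ if there is a graph automorphism $\pi$ of $G$ with $\pi(i)=i$ and $\pi(u)=v$; this is an equivalence relation, and together with the singleton $\{i\}$ its classes partition $V$. Form the weighted graph $G_i$ whose vertices are these classes, with $\phi_i:V\to V(G_i)$ mapping each vertex to its class, vertex weights $w_V(x)=|\phi_i^{-1}(x)|$, and edge weights $w_E(x,y)=$ the number of edges of $G$ with one endpoint in $\phi_i^{-1}(x)$ and the other in $\phi_i^{-1}(y)$ (with $xy$ an edge of $G_i$ when this number is positive). Suppose that no $\sim_i$-equivalence class contains an edge of $G$. Let $\widehat f_i$ be any solution of the weighted problem on $G_i$ with special vertex $\phi_i(i)$, i.e. a function $g:V(G_i)\to\mathbb{R}$ minimizing $\sum_{xy\in E(G_i)} w_E(x,y)(g(x)-g(y))^2$ subject to $\sum_{x} w_V(x)g(x)^2=1$ and $g(\phi_i(i))=0$. Then the function $f_i:V\to\mathbb{R}$, $f_i(j)=\widehat f_i(\phi_i(j))$, is a solution of the problem $$\min_{g:V\to\mathbb{R},\ \|g\|_2=1,\ g(i)=0}\ \sum_{jk\in E}(g(k)-g(j))^2$$ on $G$.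
   Context: A graph automorphism is a bijection $\pi:V\to V$ with $xy\in E$ iff $\pi(x)\pi(y)\in E$. In the objective, each edge is counted once. *)

(* Defs.v *)
From HB Require Import structures.
From mathcomp Require Import all_boot all_order all_algebra all_fingroup.
From mathcomp Require Import reals.
Set Implicit Arguments. Unset Strict Implicit. Unset Printing Implicit Defensive.
Import Order.TTheory GRing.Theory Num.Theory.
Local Open Scope ring_scope.

Section Defs.
Variable T : finType.

Definition simple_graph (e : rel T) : Prop := symmetric e /\ irreflexive e.
Definition connected_graph (e : rel T) : Prop := forall x y, connect e x y.

Definition is_aut (e : rel T) (p : {perm T}) : bool :=
  [forall x, forall y, e x y == e (p x) (p y)].

Definition sim_at (e : rel T) (i u v : T) : bool :=
  [exists p : {perm T}, [&& is_aut e p, p i == i & p u == v]].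

Definition phi (e : rel T) (i x : T) : {set T} := [set y | sim_at e i x y].

Definition classes (e : rel T) (i : T) : {set {set T}} := [set phi e i x | x in T].

Definition wV (X : {set T}) : nat := #|X|.

(* number of edges of G with one endpoint in X and the other in Y
   (X, Y distinct classes, hence disjoint: each edge counted once) *)
Definition wE (e : rel T) (X Y : {set T}) : nat :=
  #|[set p : T * T | [&& e p.1 p.2, p.1 \in X & p.2 \in Y]]|.

Variable R : realType.

(* objective on G, each edge counted once *)
Definition energy (e : rel T) (g : T -> R) : R :=
  2^-1 * \sum_(j : T) \sum_(k : T | e j k) (g k - g j) ^+ 2.

Definition feasible (i : T) (g : T -> R) : Prop :=
  \sum_(j : T) g j ^+ 2 = 1 /\ g i = 0.

Definition solution (e : rel T) (i : T) (g : T -> R) : Prop :=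
  feasible i g /\ forall g', feasible i g' -> energy e g <= energy e g'.

(* weighted objective on G_i, each edge {x,y} of G_i counted once *)
Definition wenergy (e : rel T) (i : T) (h : {set T} -> R) : R :=
  2^-1 * \sum_(X in classes e i) \sum_(Y in classes e i | X != Y)
           (wE e X Y)%:R * (h X - h Y) ^+ 2.

Definition wfeasible (e : rel T) (i : T) (h : {set T} -> R) : Prop :=
  \sum_(X in classes e i) (wV X)%:R * h X ^+ 2 = 1 /\ h (phi e i i) = 0.

Definition wsolution (e : rel T) (i : T) (h : {set T} -> R) : Prop :=
  wfeasible e i h /\ forall h', wfeasible e i h' -> wenergy e i h <= wenergy e i h'.

End Defs.

(* Main.v *)
Require Import Defs.
From mathcomp Require Import all_boot all_order all_algebra all_fingroup.
From mathcomp Require Import reals.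
From mathcomp Require Import ring lra.
Set Implicit Arguments. Unset Strict Implicit. Unset Printing Implicit Defensive.
Import Order.TTheory GRing.Theory Num.Theory.
Local Open Scope ring_scope.

Lemma cs (R : realFieldType) (I : finType) (P : pred I) (a b : I -> R) :
  (\sum_(x | P x) a x * b x) ^+ 2 <=
  (\sum_(x | P x) a x ^+ 2) * (\sum_(x | P x) b x ^+ 2).
Proof.
have H : 0 <= \sum_(x | P x) \sum_(y | P y) (a x * b y - a y * b x) ^+ 2.
  by apply: sumr_ge0 => x _; apply: sumr_ge0 => y _; exact: sqr_ge0.
have E : \sum_(x | P x) \sum_(y | P y) (a x * b y - a y * b x) ^+ 2 =
  2 * ((\sum_(x | P x) a x ^+ 2) * (\sum_(x | P x) b x ^+ 2) - (\sum_(x | P x) a x * b x) ^+ 2).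
  have E1 : forall x y, (a x * b y - a y * b x) ^+ 2 =
     a x ^+ 2 * b y ^+ 2 + b x ^+ 2 * a y ^+ 2 - (2 * (a x * b x)) * (a y * b y).
    by move=> x y; ring.
  under eq_bigr => x _ do under eq_bigr => y _ do rewrite E1.
  under eq_bigr => x _ do rewrite sumrB big_split /= -!mulr_sumr.
  rewrite sumrB big_split /= -!mulr_suml expr2.
  rewrite -mulr_sumr; ring.
rewrite E in H; rewrite -subr_ge0; lra.
Qed.

Lemma mink (R : rcfType) (I : finType) (P : pred I) (a b : I -> R) (c : R) :
  0 <= c ->
  (Num.sqrt (c * \sum_(x | P x) a x ^+ 2) - Num.sqrt (c * \sum_(x | P x) b x ^+ 2)) ^+ 2
  <= c * \sum_(x | P x) (a x - b x) ^+ 2.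
Proof.
move=> c0.
set A := \sum_(x | P x) a x ^+ 2; set B := \sum_(x | P x) b x ^+ 2.
set S := \sum_(x | P x) a x * b x.
have A0 : 0 <= A by apply: sumr_ge0 => x _; exact: sqr_ge0.
have B0 : 0 <= B by apply: sumr_ge0 => x _; exact: sqr_ge0.
have ED : \sum_(x | P x) (a x - b x) ^+ 2 = A + B - 2 * S.
  have E1 : forall x, (a x - b x) ^+ 2 = a x ^+ 2 + b x ^+ 2 - 2 * (a x * b x).
    by move=> x; ring.
  under eq_bigr => x _ do rewrite E1.
  by rewrite sumrB big_split /= -mulr_sumr.
have SL : S <= Num.sqrt A * Num.sqrt B.
  rewrite -sqrtrM //.
  case: (lerP S 0) => HS.
    exact: le_trans HS (sqrtr_ge0 _).
  rewrite -[S]ger0_norm; last exact: ltW.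
  rewrite -sqrtr_sqr; apply: ler_wsqrtr; exact: cs.
rewrite ED !sqrtrM // -!mulrBr exprMn sqr_sqrtr //.
apply: ler_wpM2l => //.
have -> : (Num.sqrt A - Num.sqrt B) ^+ 2 = A + B - 2 * (Num.sqrt A * Num.sqrt B).
  by rewrite sqrrB !sqr_sqrtr //; ring.
lra.
Qed.

Section Graph.
Variable T : finType.
Variable e : rel T.
Variable i : T.

Lemma autE p : is_aut e p -> forall x y, e (p x) (p y) = e x y.
Proof. by move=> /forallP H x y; move/forallP: (H x) => /(_ y) /eqP ->. Qed.

Lemma aut1 : is_aut e 1%g.
Proof. by apply/forallP => x; apply/forallP => y; rewrite !perm1. Qed.

Lemma autM p q : is_aut e p -> is_aut e q -> is_aut e (p * q)%g.
Proof.
move=> Hp Hq; apply/forallP => x; apply/forallP => y.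
by rewrite !permM (autE Hq) (autE Hp).
Qed.

Lemma autV p : is_aut e p -> is_aut e p^-1%g.
Proof.
move=> Hp; apply/forallP => x; apply/forallP => y.
by rewrite -{1}(permKV p x) -{1}(permKV p y) (autE Hp).
Qed.

Lemma sim_refl x : sim_at e i x x.
Proof. by apply/existsP; exists 1%g; rewrite aut1 !perm1 !eqxx. Qed.

Lemma sim_sym x y : sim_at e i x y -> sim_at e i y x.
Proof.
case/existsP => p /and3P [Ha /eqP Hi /eqP Hx]; apply/existsP; exists p^-1%g.
by rewrite autV // -{1}Hi -Hx !permK !eqxx.
Qed.

Lemma sim_trans x y z : sim_at e i x y -> sim_at e i y z -> sim_at e i x z.
Proof.
case/existsP => p /and3P [Ha /eqP Hi /eqP Hx].
case/existsP => q /and3P [Hb /eqP Hj /eqP Hy].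
apply/existsP; exists (p * q)%g.
by rewrite autM // !permM Hi Hj Hx Hy !eqxx.
Qed.

Lemma phi_sim x y : sim_at e i x y -> phi e i x = phi e i y.
Proof.
move=> Hxy; apply/setP => z; rewrite !inE; apply/idP/idP => H.
  exact: sim_trans (sim_sym Hxy) H.
exact: sim_trans Hxy H.
Qed.

Lemma phi_classes x : phi e i x \in Defs.classes e i.
Proof. by apply/imsetP; exists x. Qed.

Lemma mem_classes X j : X \in Defs.classes e i -> (j \in X) = (phi e i j == X).
Proof.
case/imsetP => x _ ->; apply/idP/idP.
  by rewrite inE => H; rewrite (phi_sim H) eqxx.
by move/eqP <-; rewrite inE sim_refl.
Qed.

Variable R : realType.

Lemma sum_phi (F : {set T} -> R) :
  \sum_(j : T) F (phi e i j) = \sum_(X in Defs.classes e i) (wV X)%:R * F X.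
Proof.
rewrite (partition_big (phi e i) (mem (Defs.classes e i))) /=; last first.
  by move=> j _; exact: phi_classes.
apply: eq_bigr => X HX.
rewrite (eq_bigr (fun _ => F X)); last by move=> j /eqP ->.
rewrite (eq_bigl (mem X)); last by move=> j; rewrite /= mem_classes.
by rewrite sumr_const mulr_natl.
Qed.

Lemma energy_phi (H : {set T} -> R) :
  energy e (fun j => H (phi e i j)) = wenergy e i H.
Proof.
rewrite /energy /wenergy; congr (_ * _).
rewrite pair_big_dep /=.
rewrite (partition_big (fun p : T * T => (phi e i p.1, phi e i p.2))
   (fun XY : {set T} * {set T} => (XY.1 \in Defs.classes e i) && (XY.2 \in Defs.classes e i))) /=;
  last by move=> p _; rewrite !phi_classes.
have -> : \sum_(X in Defs.classes e i) \sum_(Y in Defs.classes e i | X != Y)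
      (wE e X Y)%:R * (H X - H Y) ^+ 2 =
    \sum_(X in Defs.classes e i) \sum_(Y in Defs.classes e i)
      (wE e X Y)%:R * (H X - H Y) ^+ 2.
  apply: eq_bigr => X HX; rewrite [RHS](bigD1 X) //= subrr expr0n /= mulr0 add0r.
  by apply: eq_bigl => Y; rewrite eq_sym.
rewrite [RHS]pair_big_dep /=.
apply: eq_bigr => [[X Y]] /andP [HX HY] /=.
rewrite (eq_bigr (fun _ => (H Y - H X) ^+ 2)); last first.
  by move=> p /andP [_ /eqP [-> ->]].
rewrite (eq_bigl (mem [set p : T * T | [&& e p.1 p.2, p.1 \in X & p.2 \in Y]])).
  by rewrite sumr_const mulr_natl -opprB sqrrN.
move=> p; rewrite /= inE (mem_classes _ HX) (mem_classes _ HY) xpair_eqE.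
by case: (e p.1 p.2).
Qed.

Definition Gam := [set p : {perm T} | is_aut e p && (p i == i)].

Lemma reindex_aut p (F : T -> T -> R) : is_aut e p ->
  \sum_(j : T) \sum_(k | e j k) F (p j) (p k) = \sum_(j : T) \sum_(k | e j k) F j k.
Proof.
move=> Hp; rewrite [RHS](reindex_inj (@perm_inj _ p)) /=.
apply: eq_bigr => j _; rewrite [RHS](reindex_inj (@perm_inj _ p)) /=.
by apply: eq_bigl => k; rewrite (autE Hp).
Qed.

Lemma Gam_sum s (F : {perm T} -> R) : s \in Gam ->
  \sum_(p in Gam) F (s * p)%g = \sum_(p in Gam) F p.
Proof.
move=> Hs; rewrite [RHS](reindex_inj (mulgI s)) /=.
apply: eq_bigl => p; move: Hs; rewrite !inE => /andP [Ha /eqP Hi].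
apply/idP/idP => /andP [Hb /eqP Hj].
  by rewrite autM // permM Hi Hj eqxx.
have -> : p = (s^-1 * (s * p))%g by rewrite mulKg.
by rewrite autM ?autV // permM -{1}Hi permK Hj eqxx.
Qed.


Lemma average (g : T -> R) : feasible i g ->
  exists H : {set T} -> R, wfeasible e i H /\ wenergy e i H <= energy e g.
Proof.
case=> gnorm gi.
have G1 : (1%g : {perm T}) \in Gam by rewrite inE aut1 perm1 eqxx.
set n : R := #|Gam|%:R.
have n0 : n != 0 by rewrite pnatr_eq0 -lt0n card_gt0; apply/set0Pn; exists 1%g.
set c := n^-1.
have c0 : 0 <= c by rewrite invr_ge0 ler0n.
pose S j := \sum_(p in Gam) g (p j) ^+ 2.
have S0 j : 0 <= S j by apply: sumr_ge0 => p _; exact: sqr_ge0.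
pose h j := Num.sqrt (c * S j).
have hinv s j : s \in Gam -> h (s j) = h j.
  move=> Hs; rewrite /h /S; congr (Num.sqrt (c * _)).
  rewrite -(Gam_sum (fun p => g (p j) ^+ 2) Hs).
  by apply: eq_bigr => p _; rewrite permM.
pose H (X : {set T}) : R := h (odflt i [pick j in X]).
have Hphi j : H (phi e i j) = h j.
  rewrite /H; case: pickP => [k | H0] /=.
    rewrite inE => /existsP [s /and3P [Ha Hi /eqP <-]].
    by apply: hinv; rewrite inE Ha Hi.
  by move: (H0 j); rewrite inE sim_refl.
exists H; split; [split|].
- rewrite -(sum_phi (fun X => H X ^+ 2)).
  under eq_bigr => j _ do rewrite Hphi /h sqr_sqrtr ?mulr_ge0 //.
  rewrite -mulr_sumr /S exchange_big /=.
  rewrite (eq_bigr (fun _ => 1)); last first.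
    by move=> p _; rewrite -[RHS]gnorm [RHS](reindex_inj (@perm_inj _ p)).
  by rewrite sumr_const mulVf.
- rewrite Hphi /h /S big1 ?mulr0 ?sqrtr0 //.
  by move=> p; rewrite inE => /andP [_ /eqP ->]; rewrite gi expr0n.
- rewrite -energy_phi.
  have -> : energy e (fun j => H (phi e i j)) = energy e h.
    by rewrite /energy; congr (_ * _); apply: eq_bigr => j _;
       apply: eq_bigr => k _; rewrite !Hphi.
  rewrite /energy; apply: ler_wpM2l; first by rewrite invr_ge0 ler0n.
  apply: (@le_trans _ _ (\sum_(j : T) \sum_(k | e j k)
       c * \sum_(p in Gam) (g (p k) - g (p j)) ^+ 2)).
    apply: ler_sum => j _; apply: ler_sum => k _.
    exact: (mink (mem Gam) (fun p => g (p k)) (fun p => g (p j)) c0).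
  under eq_bigr => j _ do rewrite -mulr_sumr exchange_big /=.
  rewrite -mulr_sumr exchange_big /=.
  rewrite (eq_bigr (fun _ => \sum_(j : T) \sum_(k | e j k) (g k - g j) ^+ 2)).
    by rewrite sumr_const -mulr_natl mulrA mulVf // mul1r.
  move=> p; rewrite inE => /andP [Ha _].
  exact: (reindex_aut (fun a b => (g b - g a) ^+ 2) Ha).
Qed.

End Graph.

Theorem theorem4 (R : realType) (T : finType) (e : rel T) (i : T)
  (Hsimple : simple_graph e) (Hconn : connected_graph e)
  (Hnoedge : forall x y : T, e x y -> phi e i x != phi e i y)
  (fhat : {set T} -> R) (Hfhat : wsolution e i fhat) :
  solution e i (fun j => fhat (phi e i j)).
Proof.
case: Hfhat => [[Hn Hi] Hmin]; split.
  split => //; by rewrite (sum_phi e i (fun X => fhat X ^+ 2)).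
move=> g' Hg'; case: (@average T e i R g' Hg') => H [HH HE].
rewrite energy_phi; exact: le_trans (Hmin _ HH) HE.
Qed.
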